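(* Let $\rho=\frac12(I+x\sigma_1+y\sigma_2+z\sigma_3)$ with $(x,y,z)\in\mathbb R^3$ and $r:=\sqrt{x^2+y^2+z^2}\in[0,1)$, let $A\in M_2(\mathbb C)$ be self-adjoint and $f\in\mathcal F^{\,r}_{op}$. Let $\varphi_1,\varphi_2$ be an orthonormal basis of eigenvectors of $\rho$ with $\rho\varphi_1=\frac{1-r}{2}\varphi_1$, $\rho\varphi_2=\frac{1+r}{2}\varphi_2$, let $A_0=A-\mathrm{Tr}(\rho A)I$ and $a_{12}=\langle A_0\varphi_1,\varphi_2\rangle$. Then $$I^f_\rho(A)=\big[1-m_{\tilde f}(1-r,1+r)\big]\,|a_{12}|^2.$$
   Context: $\sigma_1=\begin{pmatrix}0&1\\1&0\end{pmatrix}$, $\sigma_2=\begin{pmatrix}0&-i\\i&0\end{pmatrix}$, $\sigma_3=\begin{pmatrix}1&0\\0&-1\end{pmatrix}$ are the Pauli matrices. $\mathcal F_{op}$ is the class of functions $f:(0,\infty)\to(0,\infty)$ that are operator monotone, satisfy $f(1)=1$ and $tf(t^{-1})=f(t)$ for all $t>0$. $f(0):=\lim_{x\to0^+}f(x)$, and $\mathcal F^{\,r}_{op}=\{f\in\mathcal F_{op}: f(0)\neq0\}$. For $f\in\mathcal F^{\,r}_{op}$, $\tilde f(x):=\frac12\big[(x+1)-(x-1)^2\frac{f(0)}{f(x)}\big]$ for $x>0$. For $g\in\mathcal F_{op}$ and $x,y>0$, $m_g(x,y)=xg(y/x)$. $L_\rho(X)=\rho X$, $R_\rho(X)=X\rho$,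 and $m_f(L_\rho,R_\rho)$ multiplies the entry $X_{ij}$ of $X$ (in an orthonormal eigenbasis of $\rho$ with eigenvalues $\lambda_i$) by $m_f(\lambda_i,\lambda_j)$. $\|X\|^2_{\rho,f}=\mathrm{Tr}\big(X^* m_f(L_\rho,R_\rho)^{-1}(X)\big)$. The $f$-information is $I^f_\rho(A)=\frac{f(0)}{2}\|i[\rho,A]\|^2_{\rho,f}$. *)

(* Defs.v *)
From HB Require Import structures.
From mathcomp Require Import all_boot all_order all_algebra.
From mathcomp Require Import complex.
From mathcomp Require Import all_classical all_reals all_analysis.

Set Implicit Arguments.
Unset Strict Implicit.
Unset Printing Implicit Defensive.

Import Order.TTheory GRing.Theory Num.Theory.
Local Open Scope ring_scope.

Definition RC {R : realType} (t : R) : R[i] := (t%:C)%C.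

Definition adj {R : realType} m n (M : 'M[R[i]]_(m, n)) : 'M[R[i]]_(n, m) :=
  (map_mx Num.conj M)^T.

Definition psdmx {R : realType} n (M : 'M[R[i]]_n) : Prop :=
  forall v : 'cV[R[i]]_n, 0 <= (adj v *m M *m v) 0 0.

Definition loewner_le {R : realType} n (A B : 'M[R[i]]_n) : Prop :=
  psdmx (B - A).

Definition unitary {R : realType} n (U : 'M[R[i]]_n) : Prop :=
  U *m adj U = 1%:M.

(* The positive definite matrix U^* diag(a) U (U unitary, a_i > 0) and the
   functional calculus f(U^* diag(a) U) = U^* diag(f a) U. *)
Definition spec_mx {R : realType} n (U : 'M[R[i]]_n) (a : 'rV[R]_n) :=
  adj U *m diag_mx (map_mx RC a) *m U.

(* Every positive definite matrix is of
   the form U^* diag(a) U with U unitary and a > 0. *)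
Definition operator_monotone {R : realType} (f : R -> R) : Prop :=
  forall n (U V : 'M[R[i]]_n) (a b : 'rV[R]_n),
    unitary U -> unitary V ->
    (forall j, 0 < a 0 j) -> (forall j, 0 < b 0 j) ->
    loewner_le (spec_mx U a) (spec_mx V b) ->
    loewner_le (spec_mx U (map_mx f a)) (spec_mx V (map_mx f b)).

(* the class F_op (f is only relevant on (0,oo)) *)
Definition Fop {R : realType} (f : R -> R) : Prop :=
  [/\ operator_monotone f,
      (forall t, 0 < t -> 0 < f t),
      f 1 = 1 &
      (forall t, 0 < t -> t * f t^-1 = f t)].

Definition mean {R : realType} (g : R -> R) (x y : R) : R := x * g (y / x).

Definition ftilde {R : realType} (f : R -> R) (f0 : R) (x : R) : R :=
  2^-1 * ((x + 1) - (x - 1) ^+ 2 * f0 / f x).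

Definition mx2 {R : realType} (a b c d : R[i]) : 'M[R[i]]_2 :=
  \matrix_(i < 2, j < 2)
    if (i == 0 :> nat) then (if (j == 0 :> nat) then a else b)
    else (if (j == 0 :> nat) then c else d).

Definition sigma1 {R : realType} : 'M[R[i]]_2 := mx2 0 1 1 0.
Definition sigma2 {R : realType} : 'M[R[i]]_2 := mx2 0 (- 'i%C) 'i%C 0.
Definition sigma3 {R : realType} : 'M[R[i]]_2 := mx2 1 0 0 (-1).

Definition qubit {R : realType} (x y z : R) : 'M[R[i]]_2 :=
  RC (2^-1) *: (1%:M + RC x *: sigma1 + RC y *: sigma2 + RC z *: sigma3).

(* m_f(L_rho, R_rho)^{-1}(X), computed in the orthonormal eigenbasis of rho
   given by the columns of U, with corresponding eigenvalues lam:
   the (i,j) entry of X in that basis is divided by m_f(lam_i, lam_j). *)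
Definition mf_inv {R : realType} n (f : R -> R) (U : 'M[R[i]]_n)
    (lam : 'rV[R]_n) (X : 'M[R[i]]_n) : 'M[R[i]]_n :=
  U *m (\matrix_(i, j) ((adj U *m X *m U) i j / RC (mean f (lam 0 i) (lam 0 j))))
    *m adj U.

Definition fnorm2 {R : realType} n (f : R -> R) (U : 'M[R[i]]_n)
    (lam : 'rV[R]_n) (X : 'M[R[i]]_n) : R[i] :=
  \tr (adj X *m mf_inv f U lam X).

Definition finfo {R : realType} n (f : R -> R) (f0 : R) (rho : 'M[R[i]]_n)
    (U : 'M[R[i]]_n) (lam : 'rV[R]_n) (A : 'M[R[i]]_n) : R[i] :=
  RC (f0 / 2) * fnorm2 f U lam ('i%C *: (rho *m A - A *m rho)).

(* Main.v *)
Require Import Defs.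
From HB Require Import structures.
From mathcomp Require Import all_boot all_order all_algebra.
From mathcomp Require Import complex.
From mathcomp Require Import all_classical all_reals all_analysis.
From mathcomp Require Import ring lra.
Import Order.TTheory GRing.Theory Num.Theory.
Import numFieldNormedType.Exports.
Local Open Scope classical_set_scope.
Local Open Scope ring_scope.


Lemma adjM (R : realType) m n p (A : 'M[R[i]]_(m,n)) (B : 'M[R[i]]_(n,p)) : adj (A *m B) = adj B *m adj A.
Proof. by rewrite /adj map_mxM trmx_mul. Qed.

Lemma adjK (R : realType) m n (A : 'M[R[i]]_(m,n)) : adj (adj A) = A.
Proof. by apply/matrixP=> i j; rewrite !mxE conjCK. Qed.

Lemma adjZ (R : realType) m n (c : R[i]) (A : 'M[R[i]]_(m,n)) : adj (c *: A) = Num.conj c *: adj A.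
Proof. by apply/matrixP=> i j; rewrite !mxE rmorphM. Qed.

Lemma adj00 (R : realType) (A : 'M[R[i]]_1) : adj A 0 0 = Num.conj (A 0 0).
Proof. by rewrite !mxE. Qed.

Lemma conjRC (R : realType) (t : R) : Num.conj (RC t) = RC t.
Proof. exact: conjc_real. Qed.

Lemma qubit_herm (R : realType) (x y z : R) : adj (qubit x y z) = qubit x y z.
Proof.
apply/matrixP=> i j; rewrite /adj /qubit /sigma1 /sigma2 /sigma3 /mx2 !mxE.
case: i => [[|[|?]] ?] //; case: j => [[|[|?]] ?] //;
rewrite /= ?mxE /= ?mulr1n ?mulr0n /RC;
apply/eqP; rewrite eq_complex /=; apply/andP; split; apply/eqP; ring.
Qed.

Lemma entry_col (R : realType) n (U M : 'M[R[i]]_n) i j :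
  (adj U *m M *m U) i j = (adj (col i U) *m M *m col j U) 0 0.
Proof.
rewrite !mxE; apply eq_bigr => k _; rewrite !mxE; congr (_ * _).
by apply eq_bigr => l _; rewrite !mxE.
Qed.

Lemma tr_cyc (R : realType) n (U M X : 'M[R[i]]_n) :
  \tr (adj X *m (U *m M *m adj U)) = \tr (adj (adj U *m X *m U) *m M).
Proof. by rewrite !adjM adjK !mulmxA mxtrace_mulC !mulmxA. Qed.

Definition i0 : 'I_2 := ord0.
Definition i1 : 'I_2 := Ordinal (erefl : (1 < 2)%N).

Lemma sum2 (R : realType) (F : 'I_2 -> R[i]) : \sum_(i < 2) F i = F i0 + F i1.
Proof.
rewrite big_ord_recr big_ord_recr big_ord0 /=.
rewrite add0r; by congr (F _ + F _); apply: val_inj.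
Qed.

Lemma Yab (R : realType) (rho A : 'M[R[i]]_2) (pa pb : 'cV[R[i]]_2) (la lb : R) :
  adj pa *m rho = RC la *: adj pa -> rho *m pb = RC lb *: pb ->
  (adj pa *m ('i%C *: (rho *m A - A *m rho)) *m pb) 0 0 =
  'i%C * RC (la - lb) * (adj pa *m A *m pb) 0 0.
Proof.
move=> ha hb.
rewrite -scalemxAr -scalemxAl mulmxBr mulmxBl !mulmxA ha -!mulmxA hb.
rewrite -?scalemxAl -?scalemxAr -?scalemxAl !mulmxA; set P := adj pa *m A *m pb.
rewrite !mxE /RC rmorphB /=.
ring.
Qed.

Lemma ci (R : realType) : Num.conj 'i%C * 'i%C = 1 :> R[i].
Proof. by apply/eqP; rewrite eq_complex /= ; apply/andP; split; apply/eqP; ring. Qed.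


Lemma conjM' (R : realType) (a b : R[i]) : Num.conj (a * b) = Num.conj a * Num.conj b.
Proof. exact: rmorphM. Qed.
Lemma conj0' (R : realType) : Num.conj (0 : R[i]) = 0.
Proof. exact: rmorph0. Qed.
Lemma conjK' (R : realType) (a : R[i]) : Num.conj (Num.conj a) = a.
Proof. exact: conjCK. Qed.

Lemma entryBZ (R : realType) (P Q : 'M[R[i]]_1) (c : R[i]) : (P - c *: Q) 0 0 = P 0 0 - c * Q 0 0.
Proof. by rewrite !mxE. Qed.


Lemma alg (F : fieldType) (c i a d1 d2 m S T K : F) : c * i = 1 -> m != 0 ->
  K = a * (d1 ^+ 2 / m + d2 ^+ 2 / m) ->
  a * ((c * d1 * T) * (i * d1 * S / m) + (c * d2 * S) * (i * d2 * T / m)) = K * (S * T).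
Proof.
move=> hci hm ->.
have -> : a * ((c * d1 * T) * (i * d1 * S / m) + (c * d2 * S) * (i * d2 * T / m)) =
   (c * i) * (a * (d1 ^+ 2 / m + d2 ^+ 2 / m) * (S * T)) by field.
by rewrite hci mul1r.
Qed.


Theorem mainTheorem8 (R : realType) (x y z : R) (A : 'M[R[i]]_2)
  (f : R -> R) (f0 : R) (phi1 phi2 : 'cV[R[i]]_2) :
  let r := Num.sqrt (x ^+ 2 + y ^+ 2 + z ^+ 2) in
  let rho := qubit x y z in
  r < 1 ->
  adj A = A ->
  Fop f ->
  f t @[t --> 0^'+] --> f0 ->
  f0 != 0 ->
  (adj phi1 *m phi1) 0 0 = 1 -> (adj phi2 *m phi2) 0 0 = 1 ->
  (adj phi1 *m phi2) 0 0 = 0 ->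
  rho *m phi1 = RC ((1 - r) / 2) *: phi1 ->
  rho *m phi2 = RC ((1 + r) / 2) *: phi2 ->
  let U : 'M[R[i]]_2 :=
    \matrix_(i < 2, j < 2) (if (j == 0 :> nat) then phi1 i 0 else phi2 i 0) in
  let lam : 'rV[R]_2 :=
    \row_(j < 2) (if (j == 0 :> nat) then (1 - r) / 2 else (1 + r) / 2) in
  let A0 := A - (\tr (rho *m A))%:M in
  let a12 := (adj phi2 *m (A0 *m phi1)) 0 0 in
  finfo f f0 rho U lam A =
    RC (1 - mean (ftilde f f0) (1 - r) (1 + r)) * `|a12| ^+ 2.
Proof.
move=> r rho r1 hA [_ fpos f1 fsym] _ _ n1 n2 o12 e1 e2 U lam A0 a12.
set l1 := (1 - r) / 2; set l2 := (1 + r) / 2.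
have r0 : 0 <= r by apply: sqrtr_ge0.
have l1p : 0 < l1 by rewrite /l1; lra.
have l2p : 0 < l2 by rewrite /l2; lra.
have hrho : adj rho = rho by apply: qubit_herm.
have a1 : adj phi1 *m rho = RC l1 *: adj phi1.
  by rewrite -hrho -adjM e1 adjZ conjRC.
have a2 : adj phi2 *m rho = RC l2 *: adj phi2.
  by rewrite -hrho -adjM e2 adjZ conjRC.
have c0 : col i0 U = phi1 by apply/matrixP=> i j; rewrite !mxE ord1.
have c1 : col i1 U = phi2 by apply/matrixP=> i j; rewrite !mxE ord1.
rewrite /finfo /fnorm2 /mf_inv tr_cyc.
set X := 'i%C *: _.
set Y := adj U *m X *m U.
have Y00 : Y i0 i0 = 0.
  by rewrite /Y entry_col c0 (@Yab R _ A _ _ _ _ a1 e1) subrr /RC mulr0 mul0r.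
have Y11 : Y i1 i1 = 0.
  by rewrite /Y entry_col c1 (@Yab R _ A _ _ _ _ a2 e2) subrr /RC mulr0 mul0r.
have Y01 : Y i0 i1 = 'i%C * RC (l1 - l2) * (adj phi1 *m A *m phi2) 0 0.
  by rewrite /Y entry_col c0 c1 (@Yab R _ A _ _ _ _ a1 e2).
have Y10 : Y i1 i0 = 'i%C * RC (l2 - l1) * (adj phi2 *m A *m phi1) 0 0.
  by rewrite /Y entry_col c0 c1 (@Yab R _ A _ _ _ _ a2 e1).
clearbody Y.
rewrite /mxtrace sum2 !mxE !sum2 !mxE /=.
rewrite Y00 Y11 Y01 Y10.
have hs : (adj phi1 *m A *m phi2) 0 0 = Num.conj ((adj phi2 *m A *m phi1) 0 0).
  by rewrite -adj00 !adjM adjK hA mulmxA.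
have h21 : (adj phi2 *m phi1) 0 0 = 0.
  by rewrite -[phi1]adjK -adjM adj00 o12 rmorph0.
have ha : a12 = (adj phi2 *m A *m phi1) 0 0.
  rewrite /a12 /A0 mulmxBl mul_scalar_mx mulmxBr -scalemxAr entryBZ h21 mulr0 subr0.
  by rewrite mulmxA.
rewrite hs ha sqr_normc.
move: ((adj phi2 *m A *m phi1) 0 0) => S.
rewrite -/l1 -/l2 !conj0' !mul0r !addr0 add0r !conjM' !conjRC conjK'.
have el1 : l1 = (1 - r) / 2 by [].
have el2 : l2 = (1 + r) / 2 by [].
clearbody l1 l2.
have hm : mean f l2 l1 = mean f l1 l2.
  rewrite /mean -(fsym (l1 / l2)); last by apply: divr_gt0.
  rewrite invf_div; field; rewrite gt_eqF //.
rewrite hm.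
have mp : 0 < mean f l1 l2 by rewrite /mean mulr_gt0 // fpos // divr_gt0.
apply: alg; first exact: ci.
  by rewrite /RC fmorph_eq0 gt_eqF.
rewrite /RC -!rmorphXn -!fmorphV -!rmorphM -rmorphD -rmorphM; congr (_ %:C)%C.
have h1r : 1 - r != 0 by rewrite gt_eqF // subr_gt0.
have ht : l2 / l1 = (1 + r) / (1 - r) by rewrite el1 el2; field.
have hF : f ((1 + r) / (1 - r)) != 0.
  by rewrite gt_eqF // fpos // divr_gt0 // ?subr_gt0 //; lra.
rewrite /mean ht /ftilde el1 el2.
by field; rewrite hF h1r.
Qed.
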